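(* Let $\Theta$ be a subset of a Polish space with metric $d$, equipped with its Borel $\sigma$-algebra, let $\nu$ be a probability measure on $\Theta$, and let $\{P^\theta:\theta\in\Theta\}$ be probability measures on $(\Omega,\mathcal{F})$ such that $\theta\mapsto P^\theta(A)$ is Borel measurable for each $A\in\mathcal{F}$ and $\theta\mapsto P^\theta$ is continuous in total variation (for every $\theta$ and $\varepsilon>0$ there is $\delta>0$ with $\sup_{A\in\mathcal{F}}|P^\theta(A)-P^{\theta'}(A)|<\varepsilon$ whenever $d(\theta,\theta')<\delta$). Let $\mathbb{P}(A)=\int_\Theta P^\theta(A)\,\nu(\mathrm{d}\theta)$ be the mixture probability measure. Then there exists a Borel set $\Theta^1\subseteq\Theta$ with $\nu(\Theta^1)=1$ such that $P^\theta\ll\mathbb{P}$ for all $\theta\in\Theta^1$. Moreover, letting $c\mathcal{M}^1$ be the set of all countable convex combinations of measures in $\{P^\theta:\theta\in\Theta^1\}$, for every monetary risk measure $\rho$ and every penalty function $\alpha:\mathcal{M}_1\to\mathbb{R}\cup\{+\infty\}$ and all $X\in L^\infty(\mathbb{P})$, $$\sup_{P\in c\mathcal{M}^1}\widehat\rho^P(X)=\widehat\rho^{\mathbb{P}}(X)\quad\text{and}\quad\sup_{P\in c\mathcal{M}^1}\rho^P(X)=\rho^{\mathbb{P}}(X).$$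
   Context: $(\Omega,\mathcal{F})$ is a measurable space, $\mathcal{M}_1$ the set of probability measures on it, $\mathcal{X}$ the space of pointwise bounded $\mathcal{F}$-measurable real functions. A monetary risk measure is $\rho:\mathcal{X}\to\mathbb{R}$ with, pointwise: $X\ge0\Rightarrow\rho(X)\le0$; $X\ge Y\Rightarrow\rho(X)\le\rho(Y)$; $\rho(X+a)=\rho(X)-a$. For $P\in\mathcal{M}_1$ and $X\in L^\infty(P)=L^\infty(\Omega,\mathcal{F},P)$: $\rho^P(X)=\inf\{\rho(\widetilde X):\widetilde X\in\mathcal{X},P(\widetilde X=X)=1\}$, and $\widehat\rho^P(X)=\sup_{Q\in\mathcal{M}_1,Q\ll P}\{\mathbb{E}_Q[-X]-\alpha(Q)\}$. *)

(* Defs.v *)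
From HB Require Import structures.
From mathcomp Require Import all_boot all_order all_algebra.
From mathcomp Require Import all_classical all_reals all_analysis.
From mathcomp Require Import measurable_realfun.
Set Implicit Arguments. Unset Strict Implicit. Unset Printing Implicit Defensive.
Import Order.TTheory GRing.Theory Num.Theory.
Local Open Scope classical_set_scope.
Local Open Scope ring_scope.

Section Defs.
Variable R : realType.

Definition is_metric {T : Type} (dT : T -> T -> R) : Prop :=
  (forall x y, dT x y = 0 <-> x = y) /\
  (forall x y, dT x y = dT y x) /\
  (forall x y z, dT x z <= dT x y + dT y z).

Definition complete_metric {T : Type} (dT : T -> T -> R) : Prop :=
  forall u : nat -> T,
    (forall e, 0 < e -> exists N, forall m n, (N <= m)%N -> (N <= n)%N ->
        dT (u m) (u n) < e) ->
    exists l, forall e, 0 < e -> exists N, forall n, (N <= n)%N -> dT (u n) l < e.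

Definition separable_metric {T : Type} (dT : T -> T -> R) : Prop :=
  exists S : set T, countable S /\
    forall x e, 0 < e -> exists2 s, S s & dT x s < e.

Definition polish_metric {T : Type} (dT : T -> T -> R) : Prop :=
  is_metric dT /\ complete_metric dT /\ separable_metric dT.

Definition metric_open {T : Type} (dT : T -> T -> R) (U : set T) : Prop :=
  forall x, U x -> exists2 r, 0 < r & forall y, dT x y < r -> U y.

Definition is_borel_of {d} {T : measurableType d} (dT : T -> T -> R) : Prop :=
  forall A : set T, measurable A <-> <<s metric_open dT >> A.

Variables (dO : measure_display) (Om : measurableType dO).

Definition bounded_measurable (X : Om -> R) : Prop :=
  measurable_fun setT X /\ exists M : R, forall w, `|X w| <= M.

(** Monetary risk measure (axioms required on X only). *)
Definition monetary_risk_measure (rho : (Om -> R) -> R) : Prop :=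
  (forall X, bounded_measurable X -> (forall w, 0 <= X w) -> rho X <= 0) /\
  (forall X Y, bounded_measurable X -> bounded_measurable Y ->
     (forall w, Y w <= X w) -> rho X <= rho Y) /\
  (forall X (a : R), bounded_measurable X ->
     rho (fun w => X w + a) = rho X - a).

Definition abs_cont (Q P : set Om -> \bar R) : Prop :=
  forall A, measurable A -> P A = 0%E -> Q A = 0%E.

Definition Linfty (P : set Om -> \bar R) (X : Om -> R) : Prop :=
  measurable_fun setT X /\ exists M : R, P [set w | M < `|X w|] = 0%E.

Definition rho_P (rho : (Om -> R) -> R) (P : set Om -> \bar R) (X : Om -> R)
  : \bar R :=
  ereal_inf [set (rho Y)%:E | Y in
    [set Y | bounded_measurable Y /\ P [set w | Y w = X w] = 1%E]].

Definition rhohat_P (alpha : probability Om R -> \bar R)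
  (P : set Om -> \bar R) (X : Om -> R) : \bar R :=
  ereal_sup [set (\int[Q]_w (- X w)%:E - alpha Q)%E | Q in
    [set Q : probability Om R | abs_cont Q P]].

End Defs.

(* Main.v *)
Require Import Defs.
From HB Require Import structures.
From mathcomp Require Import all_boot all_order all_algebra.
From mathcomp Require Import all_classical all_reals all_analysis.
From mathcomp Require Import measurable_realfun.
From mathcomp Require Import lra.
Import Order.TTheory GRing.Theory Num.Theory.
Local Open Scope classical_set_scope.
Local Open Scope ring_scope.

Section Gen.
Variable R : realType.
Variables (dO : measure_display) (Om : measurableType dO).

Lemma abs_cont_trans (P Q M : set Om -> \bar R) :
  abs_cont P Q -> abs_cont Q M -> abs_cont P M.
Proof. by move=> h1 h2 A mA /(h2 A mA) /(h1 A mA). Qed.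

Lemma rhohat_mono alpha (P M : set Om -> \bar R) X :
  abs_cont P M -> (rhohat_P alpha P X <= rhohat_P alpha M X)%E.
Proof.
move=> hPM; apply: ge_ereal_sup => _ [Q hQ <-].
apply: ereal_sup_ubound; exists Q => //.
exact: abs_cont_trans hQ hPM.
Qed.

Definition cadd (P : set Om -> \bar R) :=
  forall E, measurable E -> (P E + P (~` E) = 1)%E.

Lemma e10 (a b : \bar R) : (a + b = 1)%E -> a = 1%E -> b = 0%E.
Proof.
move=> h ha; move: h; rewrite ha.
case: b => [r| |] //=.
move=> /eqP; rewrite -EFinD eqe => /eqP h; congr EFin.
by have := h; rewrite -[X in _ = X]addr0 => /addrI.
Qed.

Lemma cadd_one (P : set Om -> \bar R) E : cadd P -> measurable E ->
  (P E = 1 <-> P (~` E) = 0)%E.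
Proof.
move=> hP mE; split; first exact: e10 (hP E mE).
by move=> h; have := hP E mE; rewrite h adde0.
Qed.

Lemma meas_eq (X Y : Om -> R) : measurable_fun setT X -> measurable_fun setT Y ->
  measurable [set w | Y w = X w].
Proof.
move=> mX mY.
have -> : [set w | Y w = X w] = setT `&` ((Y \- X) @^-1` [set 0]).
  apply/seteqP; split => w /=.
    by move=> ->; split => //; rewrite subrr.
  by move=> [_ /eqP]; rewrite subr_eq0 => /eqP.
exact: (measurable_funB mY mX) measurableT _ (measurable_set1 _).
Qed.

Arguments cadd_one {P E}.
Lemma rhoP_mono rho (P M : set Om -> \bar R) X :
  abs_cont P M -> cadd P -> cadd M -> measurable_fun setT X ->
  (rho_P rho P X <= rho_P rho M X)%E.
Proof.
move=> hPM hP hM mX; apply: le_ereal_inf_tmp => _ [Y [hY hMY] <-].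
apply: ereal_inf_lbound; exists Y => //; split => //.
have mE := @meas_eq X Y mX hY.1.
apply: (proj2 (cadd_one hP mE)); apply: hPM; first exact: measurableC.
exact: (proj1 (cadd_one hM mE)).
Qed.

Lemma sup_attained (S : set (\bar R)) v :
  (forall y, S y -> (y <= v)%E) -> S v -> ereal_sup S = v.
Proof.
move=> h hv; apply/eqP; rewrite eq_le; apply/andP; split.
  exact: ge_ereal_sup.
exact: ereal_sup_ubound.
Qed.

End Gen.

Section Ser.
Variable R : realType.

Definition lamh (n : nat) : R := 1 / (2 ^ (n + 1))%:R.

Lemma lamh_gt0 n : 0 < lamh n.
Proof. by rewrite /lamh divr_gt0 // ltr0n expn_gt0. Qed.

Lemma lamh_sum : (\sum_(0 <= n <oo) (lamh n)%:E)%E = 1%E.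
Proof.
have := @cvg_geometric_eseries_half R 1 0.
rewrite expr0 divr1 => h.
exact: cvg_lim h.
Qed.

End Ser.

Section Gen2.
Variable R : realType.
Variables (dO : measure_display) (Om : measurableType dO).
Local Notation cadd := (@cadd R dO Om).

Lemma term_le_series (f : nat -> \bar R) n : (forall k, 0 <= f k)%E ->
  (f n <= \sum_(0 <= k <oo) f k)%E.
Proof.
move=> f0; apply: le_trans (nneseries_lim_ge n.+1 _); last by move=> *; exact: f0.
rewrite big_nat_recr //=.
rewrite -[X in (X <= _)%E]add0e leeD2r //.
by apply: sume_ge0 => *; exact: f0.
Qed.

Lemma pfin (P : probability Om R) A : measurable A -> P A = (fine (P A))%:E.
Proof. by move=> mA; rewrite fineK // fin_num_measure. Qed.

Lemma prob_compl (P : probability Om R) E : measurable E -> (P E + P (~` E) = 1)%E.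
Proof.
move=> mE; rewrite -measureU ?setUv ?probability_setT ?setICr //.
  exact: probability_setT.
exact: measurableC.
Qed.

Lemma cadd_prob (P : probability Om R) : cadd P.
Proof. by move=> E mE; exact: prob_compl. Qed.

Lemma cadd_series (lam : nat -> R) (Ps : nat -> probability Om R) :
  (forall n, 0 <= lam n) -> (\sum_(0 <= n <oo) (lam n)%:E)%E = 1%E ->
  cadd (fun A => \sum_(0 <= n <oo) ((lam n)%:E * Ps n A))%E.
Proof.
move=> l0 l1 E mE /=.
rewrite -nneseriesD; last 2 first.
- by move=> i _ _; rewrite mule_ge0 // lee_fin.
- by move=> i _ _; rewrite mule_ge0 // lee_fin.
rewrite -l1; apply: eq_eseriesr => i _.
by rewrite -ge0_muleDr // prob_compl // mule1.
Qed.

Lemma abs_series (lam : nat -> R) (Ps : nat -> probability Om R) M :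
  (forall n, abs_cont (Ps n) M) ->
  abs_cont (fun A => \sum_(0 <= n <oo) ((lam n)%:E * Ps n A))%E M.
Proof.
move=> h A mA MA /=; apply: eseries0 => i _ _.
by rewrite (h i A mA MA) mule0.
Qed.

Lemma series_zero (lam : nat -> R) (Ps : nat -> probability Om R) A :
  (forall n, 0 < lam n) ->
  (\sum_(0 <= n <oo) ((lam n)%:E * Ps n A))%E = 0%E -> forall n, Ps n A = 0%E.
Proof.
move=> l0 h n.
have h0 : forall k, (0 <= (lam k)%:E * Ps k A)%E.
  by move=> k; rewrite mule_ge0 // lee_fin ltW.
have := @term_le_series _ n h0; rewrite h => hle.
have : ((lam n)%:E * Ps n A)%E = 0%E by apply/eqP; rewrite eq_le hle h0.
move/eqP; rewrite mule_eq0 eqe (gt_eqF (l0 n)) /= => /eqP //.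
Qed.
End Gen2.

Arguments pfin {R dO Om} P {A}.
Arguments cadd_series {R dO Om}.
Arguments abs_series {R dO Om}.
Arguments series_zero {R dO Om}.
Arguments rhohat_mono {R dO Om}.
Arguments rhoP_mono {R dO Om}.
Arguments sup_attained {R}.
Arguments lamh {R}.
Arguments lamh_gt0 {R}.
Arguments lamh_sum {R}.
Arguments cadd_prob {R dO Om}.
Arguments cadd {R dO Om}.

Theorem theorem6p10 (R : realType)
  (dO : measure_display) (Om : measurableType dO)
  (dT : measure_display) (Th : measurableType dT)
  (dist : Th -> Th -> R)
  (Hpolish : exists (T : Type) (dP : T -> T -> R) (iota : Th -> T),
      polish_metric dP /\ forall x y, dP (iota x) (iota y) = dist x y)
  (Hborel : is_borel_of dist)
  (nu : probability Th R)
  (Pth : Th -> probability Om R)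
  (Hmeas : forall A : set Om, measurable A -> measurable_fun [set: Th] (fun th => (Pth th A : \bar R)))
  (Htv : forall th (eps : R), 0 < eps -> exists2 delta : R, 0 < delta &
      forall th', dist th th' < delta ->
        (ereal_sup [set `|Pth th A - Pth th' A|%E | A in @measurable _ Om]
          < eps%:E)%E) :
  let mix : set Om -> \bar R := fun A => (\int[nu]_th Pth th A)%E in
  exists Th1 : set Th,
    [/\ measurable Th1, nu Th1 = 1%E,
        (forall th, Th1 th -> abs_cont (Pth th) mix) &
        let cM1 : set (set Om -> \bar R) :=
          [set P | exists (lam : nat -> R) (ths : nat -> Th),
             [/\ forall n, 0 <= lam n,
                 (\sum_(0 <= n <oo) (lam n)%:E)%E = 1%E,
                 forall n, Th1 (ths n) &
                 P = (fun A => \sum_(0 <= n <oo) ((lam n)%:E * Pth (ths n) A))%E]] in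
        forall (rho : (Om -> R) -> R) (alpha : probability Om R -> \bar R),
          monetary_risk_measure rho ->
          (forall Q, alpha Q <> -oo%E) ->
          forall X : Om -> R, Linfty mix X ->
            ereal_sup [set rhohat_P alpha P X | P in cM1] = rhohat_P alpha mix X /\
            ereal_sup [set rho_P rho P X | P in cM1] = rho_P rho mix X].
Proof.
move=> mix.
have [T [dP [iota [[Hmet [_ Hsep]] Hiso]]]] := Hpolish.
have dsym x y : dist x y = dist y x by rewrite -!Hiso Hmet.2.1.
have dtri x y z : dist x z <= dist x y + dist y z by rewrite -!Hiso; exact: Hmet.2.2.
have d0 x : dist x x = 0 by rewrite -Hiso; apply/Hmet.1.
have hm (e : R) : 0 < e -> exists m : nat, (m.+1%:R)^-1 + (m.+1%:R)^-1 < e.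
  move=> e0; exists (Num.trunc (2 / e)).
  have := truncnS_gt (2 / e).
  set n := (Num.trunc (2 / e)).+1%:R => k.
  have n0 : 0 < n by rewrite /n ltr0n.
  have -> : n^-1 + n^-1 = 2 / n by rewrite mulr_natl mulr2n.
  by rewrite ltr_pdivrMr // mulrC -ltr_pdivrMr.
have dense (S : set Th) th0 : S th0 -> exists z : nat -> Th, (forall n, S (z n)) /\
    forall th, S th -> forall e, 0 < e -> exists n, dist th (z n) < e.
  move=> Sth0.
  have [D [cD dD]] := Hsep.
  have /countable_injP [f finj] := cD.
  pose Pr (k m : nat) (y : Th) := S y /\ exists s, [/\ D s, f s = k & dP (iota y) s < (m.+1%:R)^-1].
  pose y k m := match pselect (exists y, Pr k m y) with
                | left h => projT1 (cid h) | right _ => th0 end.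
  have yS k m : S (y k m).
    by rewrite /y; case: pselect => [h|//]; case: (projT2 (cid h)).
  pose z n := match @unpickle (nat * nat)%type n with
              | Some km => y km.1 km.2 | None => th0 end.
  exists z; split.
    by move=> n; rewrite /z; case: unpickle => [[k m]|].
  move=> th Sth e e0.
  have [m hme] := hm e e0.
  have [s Ds hs] := dD (iota th) (m.+1%:R)^-1 ltac:(by rewrite invr_gt0 ltr0n).
  exists (pickle (f s, m)); rewrite /z pickleK /= /y.
  case: pselect => [h|hn]; last first.
    by exfalso; apply: hn; exists th; split => //; exists s.
  case: (projT2 (cid h)) => _ [s' [Ds' fs' hs']].
  have ss : s' = s by apply: finj; rewrite ?in_setE.
  subst s'.
  rewrite -Hiso; apply: le_lt_trans (Hmet.2.2 _ s _) _.
  rewrite (Hmet.2.1 s); apply: lt_trans hme.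
  exact: ltrD.
pose B c r := [set y | dist c y < r].
have Bmeas c r : measurable (B c r).
  apply/Hborel; apply: sub_gen_smallest => x /= hx.
  exists (r - dist c x); first by rewrite subr_gt0.
  move=> w hw; rewrite /B /=.
  apply: le_lt_trans (dtri c x w) _.
  by rewrite -ltrBrDl.
have [th0 _] : exists th : Th, True.
  case: (pselect (exists th : Th, True)) => // hn.
  have h : [set: Th] = set0.
    by apply/seteqP; split => x // _; exfalso; apply: hn; exists x.
  have := probability_setT nu; rewrite h measure0 => /eqP.
  by rewrite eqe eq_sym oner_eq0.
have [z0 [_ z0d]] := dense setT th0 I.
pose rr (m : nat) : R := (m.+1%:R)^-1.
pose N (n m : nat) := if nu (B (z0 n) (rr m)) == 0%E then B (z0 n) (rr m) else set0.
pose U := \bigcup_n \bigcup_m N n m.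
have mN n m : measurable (N n m) by rewrite /N; case: ifP.
have mU : measurable U by apply: bigcupT_measurable => n; exact: bigcupT_measurable.
have nuU : nu U = 0%E.
  have : nu.-negligible U.
    apply: negligible_bigcup => n; apply: negligible_bigcup => m.
    exists (N n m); split => //; rewrite /N; case: ifP => [/eqP //|_].
    exact: measure0.
  move=> [A [mA A0 UA]]; apply/eqP; rewrite eq_le measure_ge0 andbT.
  by rewrite -A0; apply: le_measure => //; rewrite inE.
pose S := ~` U.
have mS : measurable S by exact: measurableC.
have nuS : nu S = 1%E by rewrite probability_setC // nuU sube0.
have Spos th r : S th -> 0 < r -> 0 < fine (nu (B th r)).
  move=> Sth r0.
  have [m hme] := hm r r0.
  have [n hn] := z0d th I (rr m) ltac:(by rewrite invr_gt0 ltr0n).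
  have snz : nu (B (z0 n) (rr m)) != 0%E.
    apply/negP => /eqP h0; apply: Sth; exists n => //; exists m => //.
    by rewrite /N h0 eqxx /B /= dsym.
  have incl : B (z0 n) (rr m) `<=` B th r.
    move=> w hw; rewrite /B /=; apply: le_lt_trans (dtri th (z0 n) w) _.
    by apply: lt_trans hme; apply: ltrD.
  have hle : (nu (B (z0 n) (rr m)) <= nu (B th r))%E.
    by apply: le_measure => //; rewrite inE.
  have fs : nu (B (z0 n) (rr m)) \is a fin_num by rewrite fin_num_measure.
  have fb : nu (B th r) \is a fin_num by rewrite fin_num_measure.
  apply: (lt_le_trans _ (fine_le fs fb hle)).
  apply: fine_gt0; rewrite lt_neqAle eq_sym snz measure_ge0 /=.
  by rewrite ltey_eq fs.
have [th1 Sth1] : exists th, S th.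
  case: (pselect (exists th, S th)) => // hn.
  have h : S = set0.
    by apply/seteqP; split => x // Sx; exfalso; apply: hn; exists x.
  move: nuS; rewrite h measure0 => /eqP.
  by rewrite eqe eq_sym oner_eq0.
have [z [zS zd]] := dense S th1 Sth1.
have tv th e : 0 < e -> exists2 dl, 0 < dl & forall th', dist th th' < dl ->
    forall A, measurable A -> `|fine (Pth th A) - fine (Pth th' A)| < e.
  move=> e0; have [dl dl0 h] := Htv th e e0; exists dl => // th' hth A mA.
  have hs := h th' hth.
  have hub : (`|Pth th A - Pth th' A| <=
      ereal_sup [set `|Pth th A0 - Pth th' A0|%E | A0 in @measurable _ Om])%E.
    by apply: ereal_sup_ubound; exists A.
  move: (le_lt_trans hub hs).
  by rewrite {1}(pfin (Pth th) mA) {1}(pfin (Pth th') mA) -EFinB abse_EFin lte_fin.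
have absS th : S th -> abs_cont (Pth th) mix.
  move=> Sth A mA mix0.
  have ge0 : 0 <= fine (Pth th A) by apply: fine_ge0.
  case: (eqVneq (fine (Pth th A)) 0) => [h0|hne].
    by rewrite (pfin (Pth th) mA) h0.
  exfalso.
  set p := fine (Pth th A) in ge0 hne.
  have p0 : 0 < p by rewrite lt_neqAle eq_sym hne ge0.
  have [dl dl0 hdl] := tv th (p / 2) ltac:(by rewrite divr_gt0).
  have hpos := Spos th dl Sth dl0.
  have hle : (\int[nu]_x ((p/2) * \1_(B th dl) x)%:E <= mix A)%E.
    rewrite /mix; apply: ge0_le_integral => //.
    - by move=> x _; rewrite lee_fin mulr_ge0 // ?divr_ge0 ?ltW // indicE ler0n.
    - apply/measurable_EFinP; apply: measurable_funM => //.
    - exact: Hmeas.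
    move=> x _; rewrite indicE; case: (boolP (x \in B th dl)) => hx.
      rewrite mulr1 (pfin (Pth x) mA) lee_fin.
      rewrite in_setE in hx.
      have := hdl x hx A mA; rewrite -/p => hlt.
      have := ler_norm (p - fine (Pth x A)).
      lra.
    by rewrite mulr0 measure_ge0.
  move: hle; rewrite mix0.
  rewrite (integralZl_indic measurableT (fun=> B th dl) (p/2)) //; last first.
    by move=> h; exfalso; move: h; rewrite ltNge divr_ge0 // ltW.
  rewrite integral_indic // setIT. rewrite -[X in (_ * X <= _)%E -> _]fineK ?fin_num_measure // -EFinM lee_fin.
  rewrite leNgt => /negP; apply.
  by rewrite mulr_gt0 // divr_gt0.
have caddmix : cadd mix.
  move=> E mE; rewrite /mix -ge0_integralD //; last 2 first.
  - exact: Hmeas.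
  - by apply: Hmeas; exact: measurableC.
  transitivity (\int[nu]_(x in setT) (cst 1%E x))%E.
    by apply: eq_integral => x _; exact: prob_compl.
  by rewrite integral_cst // mul1e; exact: probability_setT.
pose P0 := fun A => (\sum_(0 <= n <oo) ((lamh n)%:E * Pth (z n) A))%E.
have mixP0 : abs_cont mix P0.
  move=> A mA P00.
  have hz := series_zero lamh (fun n => Pth (z n)) A lamh_gt0 P00.
  have allS th : S th -> Pth th A = 0%E.
    move=> Sth; rewrite (pfin _ mA).
    have ge0 : 0 <= fine (Pth th A) by apply: fine_ge0.
    case: (eqVneq (fine (Pth th A)) 0) => [-> //|hne].
    exfalso.
    set p := fine (Pth th A) in ge0 hne.
    have p0 : 0 < p by rewrite lt_neqAle eq_sym hne ge0.
    have [dl dl0 hdl] := tv th (p / 2) ltac:(by rewrite divr_gt0).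
    have [n hn] := zd th Sth dl dl0.
    have := hdl (z n) hn A mA; rewrite -/p hz /= subr0 gtr0_norm //.
    lra.
  apply/eqP; rewrite eq_le integral_ge0 ?andbT //.
  have hU : (\int[nu]_x (\1_U x)%:E = 0)%E by rewrite integral_indic // setIT.
  rewrite -hU; apply: ge0_le_integral => //.
  - exact: Hmeas.
  - by apply/measurable_EFinP; exact: measurable_indic.
  move=> x _; rewrite indicE; case: (boolP (x \in U)) => hx.
    exact: probability_le1.
  rewrite allS //; move/negP: hx => hx Ux; apply: hx; by rewrite in_setE.
exists S; split => //.
move=> cM1 rho alpha _ _ X [mX _].
have cM1le P : cM1 P -> abs_cont P mix /\ cadd P.
  move=> [lam [ths [l0 l1 thsS ->]]]; split.
    by apply: abs_series => n; exact: absS.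
  exact: cadd_series.
have P0in : cM1 P0.
  exists lamh, z; split => //; [move=> n; exact: ltW (lamh_gt0 n) | exact: lamh_sum].
have [P0a P0c] := cM1le _ P0in.
split; apply: sup_attained.
- by move=> _ [P hP <-]; exact: rhohat_mono (cM1le P hP).1.
- exists P0 => //; apply/eqP; rewrite eq_le !rhohat_mono //.
- by move=> _ [P hP <-]; have [h1 h2] := cM1le P hP; exact: rhoP_mono.
- exists P0 => //; apply/eqP; rewrite eq_le !rhoP_mono //.
Qed.
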